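(* Fix a total order on $I$ and index by pairs $(m,n)$ with $m<n$ (i.e. by the off-diagonal fields $\langle m,n\rangle$). Define the matrix $S^{J}_{\langle m,n\rangle\langle p,q\rangle}=S_{mp}S_{nq}-S_{mq}S_{np}$ and the diagonal matrix $T^{J}_{\langle m,n\rangle}=T_mT_n$. Then $S^J$ is unitary, and if $S$ and $T$ satisfy $(ST)^3=S^2$ then $(S^JT^J)^3=(S^J)^2$.
   Context: Let $\mathcal{A}$ be a rational conformal field theory with finite set of primary fields $I$, unitary symmetric modular matrix $S$ and diagonal modular matrix $T=\mathrm{diag}(T_i)$, $T_i=e^{2\pi i(h_i-c/24)}$. The matrix $S^J$ above is the fixed point resolution matrix proposed for the anti-symmetric identity current $J=(0,1)$ of the $\mathbb{Z}_2$ permutation orbifold of $\mathcal{A}$, whose fixed points are exactly the off-diagonal fields $\langle m,n\rangle$, $m\neq n$. *)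

(* Defs.v *)
From HB Require Import structures.
From mathcomp Require Import all_boot all_order all_algebra all_field.
Set Implicit Arguments. Unset Strict Implicit. Unset Printing Implicit Defensive.
Import Order.TTheory GRing.Theory Num.Theory.
Local Open Scope ring_scope.

(* Primary fields I = 'I_k, totally ordered by the natural order on ordinals. *)
Definition offdiag (k : nat) := {p : 'I_k * 'I_k | (p.1 < p.2)%N}.

Definition npairs (k : nat) : nat := #|{: offdiag k}|.

Definition pair_of (k : nat) (a : 'I_(npairs k)) : 'I_k * 'I_k :=
  val (@enum_val (offdiag k) (mem predT) a).

Definition unitary_mx (n : nat) (U : 'M[algC]_n) : Prop :=
  U *m (map_mx Num.conj U)^T = 1%:M.

Definition SJ (k : nat) (S : 'M[algC]_k) : 'M[algC]_(npairs k) :=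
  \matrix_(a, b)
    let mn := pair_of a in let pq := pair_of b in
    S mn.1 pq.1 * S mn.2 pq.2 - S mn.1 pq.2 * S mn.2 pq.1.

Definition TJ (k : nat) (t : 'rV[algC]_k) : 'M[algC]_(npairs k) :=
  diag_mx (\row_a let mn := pair_of a in t 0 mn.1 * t 0 mn.2).

(* Main.v *)
Require Import Defs.
From HB Require Import structures.
From mathcomp Require Import all_boot all_order all_algebra all_field.
From mathcomp Require Import ring.
Import Order.TTheory GRing.Theory Num.Theory.
Local Open Scope ring_scope.

Section K.
Variable k : nat.
Definition M2 (A : 'M[algC]_k) (x y : 'I_k * 'I_k) :=
  A x.1 y.1 * A x.2 y.2 - A x.1 y.2 * A x.2 y.1.

Lemma M2_mul A B x y : M2 (A *m B) x y =
  \sum_(p : 'I_k * 'I_k | (p.1 < p.2)%N) M2 A x p * M2 B p y.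
Proof.
rewrite /M2 !mxE !big_distrlr /= !pair_bigA /= -sumrB.
pose G (p : 'I_k * 'I_k) := A x.1 p.1 * A x.2 p.2 * M2 B p y.
transitivity (\sum_(p : 'I_k * 'I_k) G p).
  apply: eq_bigr => p _; rewrite /G /M2; ring.
rewrite (bigID (fun p : 'I_k * 'I_k => (p.1 < p.2)%N)) /=.
have -> : \sum_(p : 'I_k * 'I_k | ~~ (p.1 < p.2)%N) G p = \sum_(p : 'I_k * 'I_k | (p.2 < p.1)%N) G p.
  rewrite big_mkcond [RHS]big_mkcond; apply: eq_bigr => -[i j] _ /=.
  rewrite -leqNgt leq_eqVlt; case: (ltngtP j i) => //= eij.
  have -> : j = i by apply: val_inj. rewrite /G /M2 /=; ring.
rewrite [X in _ + X](reindex_inj (h := fun p : 'I_k * 'I_k => (p.2, p.1))); last first.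
  by move=> [a b] [c d] [-> ->].
rewrite /= -big_split /=; apply: eq_bigr => p _; rewrite /G /M2 /=; ring.
Qed.

Lemma sum_offdiag (G : 'I_k * 'I_k -> algC) :
  \sum_(p : 'I_k * 'I_k | (p.1 < p.2)%N) G p = \sum_(u : offdiag k) G (val u).
Proof.
rewrite (reindex_omap (val : offdiag k -> 'I_k * 'I_k) insub); last first.
  by move=> i Pi; rewrite insubT.
by apply: eq_bigl=> -[i iA]/=; rewrite insubT ?iA /= eqxx.
Qed.

Lemma sum_pairs (G : 'I_k * 'I_k -> algC) :
  \sum_(u : offdiag k) G (val u) = \sum_(a < npairs k) G (pair_of a).
Proof. by rewrite (big_enum_val (A := mem predT)). Qed.

Lemma sum_od (G : 'I_k * 'I_k -> algC) :
  \sum_(p : 'I_k * 'I_k | (p.1 < p.2)%N) G p = \sum_(a < npairs k) G (pair_of a).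
Proof. by rewrite sum_offdiag sum_pairs. Qed.

Lemma SJE (S : 'M[algC]_k) a b : SJ S a b = M2 S (pair_of a) (pair_of b).
Proof. by rewrite mxE. Qed.

Lemma SJ_mul (A B : 'M[algC]_k) : SJ (A *m B) = SJ A *m SJ B.
Proof.
apply/matrixP => a b; rewrite SJE M2_mul sum_od [RHS]mxE.
by apply: eq_bigr => c _; rewrite !SJE.
Qed.

Lemma pair_lt (a : 'I_(npairs k)) : ((pair_of a).1 < (pair_of a).2)%N.
Proof. exact: (valP (@enum_val (offdiag k) (mem predT) a)). Qed.

Lemma pair_inj : injective (@pair_of k).
Proof. by move=> a b /val_inj /enum_val_inj. Qed.

Lemma SJ_diag (f : 'I_k -> algC) (X : 'M[algC]_k)
  (hX : forall i j, X i j = f i *+ (i == j)) :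
  SJ X = diag_mx (\row_a (f (pair_of a).1 * f (pair_of a).2)).
Proof.
apply/matrixP => a b; rewrite SJE /M2 !hX !mxE.
have ha := pair_lt a; have hb := pair_lt b.
case: (eqVneq a b) => [<-|nab].
  have : (pair_of a).1 != (pair_of a).2 by rewrite -(inj_eq val_inj) neq_ltn ha.
  move/negbTE => h; rewrite !eqxx h /=; ring.
have hp : pair_of a != pair_of b by apply: contra nab => /eqP /pair_inj ->.
rewrite mulr0n.
move: ha hb hp; case: (pair_of a) => [p1 p2]; case: (pair_of b) => [q1 q2] /= ha hb hp.
case: (p1 =P q1) => [e1|?]; case: (p2 =P q2) => [e2|?];
case: (p1 =P q2) => [e3|?]; case: (p2 =P q1) => [e4|?];
rewrite ?mulr0n ?mulr1n ?mul0r ?mulr0 ?subrr ?subr0 ?sub0r ?oppr0 //.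
all: exfalso.
all: first [ by move: hp; rewrite e1 e2 eqxx
           | by move: ha hb; rewrite e3 e4 => ha hb; have := ltn_trans ha hb; rewrite ltnn ].
Qed.

Lemma SJ1 : SJ (1%:M : 'M[algC]_k) = 1%:M.
Proof.
rewrite (@SJ_diag (fun _ => 1)) => [|i j]; last by rewrite mxE.
by apply/matrixP => a b; rewrite !mxE mulr1.
Qed.

Lemma TJE (t : 'rV[algC]_k) : TJ t = SJ (diag_mx t).
Proof.
rewrite (@SJ_diag (fun i => t 0 i)) => [|i j]; last by rewrite mxE.
by [].
Qed.

Lemma SJ_conj (S : 'M[algC]_k) :
  (map_mx Num.conj (SJ S))^T = SJ ((map_mx Num.conj S)^T).
Proof.
apply/matrixP => a b; rewrite !mxE /M2 !mxE rmorphB !rmorphM; ring.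
Qed.
End K.

Theorem mainTheorem7 (k : nat) (S : 'M[algC]_k) (t : 'rV[algC]_k)
  (S_unitary : unitary_mx S) (S_sym : S^T = S)
  (t_phase : forall i, `|t 0 i| = 1) :
  let T := diag_mx t in
  unitary_mx (SJ S) /\
  (S *m T *m (S *m T) *m (S *m T) = S *m S ->
   SJ S *m TJ t *m (SJ S *m TJ t) *m (SJ S *m TJ t) = SJ S *m SJ S).
Proof.
move=> T; split.
  by rewrite /unitary_mx SJ_conj -SJ_mul S_unitary SJ1.
by move=> H; rewrite TJE -!SJ_mul H.
Qed.
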